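(* Let $G$ be a finite connected graph with a real structure and let $D_1,D_2$ be two linearly equivalent real divisors on $G$. Let $G'$ be a connected component of $G(\mathbb R)$. Then $\deg(D_1|_{G'})\equiv\deg(D_2|_{G'})\pmod 2$, where $\deg(D|_{G'})=\sum_{v\in V(G')}D(v)$.
   Context: A finite graph $G$ has vertex set $V(G)$, edge set $E(G)$ and incidence function $\psi$ assigning to each edge a set of one or two vertices (loops and multiple edges allowed). A real structure on $G$ is a pair of involutions of $V(G)$ and $E(G)$, written $v\mapsto\overline v$, $e\mapsto\overline e$, with $\psi(\overline e)=\overline{\psi(e)}$. A vertex/edge is real if fixed by the involution; a real edge $e$ is non-isolated if both ends are real vertices. $G(\mathbb R)$ is the subgraph whose vertices are the real vertices and whose edges are the non-isolated real edges. A divisor is a formal $\mathbb Z$-combination $D=\sum_vD(v)v$ of vertices; $\overline D(v)=D(\overline v)$ and $D$ is real if $\overline D=D$. For $f:V(G)\to\mathbb Z$, $\Delta(f)(v)=\sum_{e\in E(G),\,\psi(e)=\{v,w\}}(f(w)-f(v))$; $D_1\sim D_2$ iff $D_2-D_1=\Delta(f)$ for some $f$. *)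

(* Defs.v *)
From mathcomp Require Import all_boot all_order all_algebra.
Set Implicit Arguments. Unset Strict Implicit. Unset Printing Implicit Defensive.
Import GRing.Theory Num.Theory.
Local Open Scope ring_scope.

(* A finite graph with loops and multiple edges: vertex type V, edge type E,
   incidence psi assigning to each edge a set of one or two vertices. *)
Definition is_graph (V E : finType) (psi : E -> {set V}) : Prop :=
  forall e, (0 < #|psi e| <= 2)%N.

Definition adj (V E : finType) (psi : E -> {set V}) : rel V :=
  fun u v => [exists e, psi e == [set u; v]].

Definition connected_graph (V E : finType) (psi : E -> {set V}) : Prop :=
  forall u v, connect (adj psi) u v.

Definition real_structure (V E : finType) (psi : E -> {set V})
  (sV : V -> V) (sE : E -> E) : Prop :=
  [/\ involutive sV, involutive sE & forall e, psi (sE e) = sV @: psi e].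

(* adjacency in G(R): both vertices real, joined by a real edge
   (which is then non-isolated) *)
Definition real_adj (V E : finType) (psi : E -> {set V})
  (sV : V -> V) (sE : E -> E) : rel V :=
  fun u v => [&& sV u == u, sV v == v &
               [exists e, (sE e == e) && (psi e == [set u; v])]].

Definition real_component (V E : finType) (psi : E -> {set V})
  (sV : V -> V) (sE : E -> E) (C : {set V}) : Prop :=
  exists2 v, sV v = v & C = [set w | connect (real_adj psi sV sE) v w].

(* Laplacian: Delta f v = sum over edges e with psi e = {v,w} of (f w - f v).
   Summing over all endpoints w of e gives (f v - f v) + (f w - f v) for a
   non-loop and 0 for a loop. *)
Definition laplacian (V E : finType) (psi : E -> {set V}) (f : V -> int)
  (v : V) : int :=
  \sum_(e | v \in psi e) \sum_(w in psi e) (f w - f v).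

Definition lin_equiv (V E : finType) (psi : E -> {set V})
  (D1 D2 : V -> int) : Prop :=
  exists f : V -> int, forall v, D2 v - D1 v = laplacian psi f v.

Definition real_divisor (V : finType) (sV : V -> V) (D : V -> int) : Prop :=
  forall v, D (sV v) = D v.

Definition deg_on (V : finType) (D : V -> int) (C : {set V}) : int :=
  \sum_(v in C) D v.

(* Main.v *)
Require Import Defs.
From mathcomp Require Import all_boot all_order all_algebra.
From mathcomp Require Import zify ring.
Set Implicit Arguments. Unset Strict Implicit. Unset Printing Implicit Defensive.
Import Order.TTheory GRing.Theory Num.Theory.
Local Open Scope ring_scope.

Section Aux.
Variables (V E : finType) (psi : E -> {set V}).

Lemma lapB (f h : V -> int) v :
  laplacian psi (fun x => f x - h x) v = laplacian psi f v - laplacian psi h v.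
Proof.
rewrite /laplacian -sumrB; apply: eq_bigr => e _.
rewrite -sumrB; apply: eq_bigr => w _; ring.
Qed.

Lemma adj_sym : symmetric (adj psi).
Proof. by move=> u v; rewrite /adj setUC. Qed.

Lemma harmonic_const (g : V -> int) :
  connected_graph psi -> (forall v, laplacian psi g v = 0) ->
  forall u v, g u = g v.
Proof.
move=> hc hh u v.
case: (arg_maxP g (erefl true : xpredT u)) => m _ Hm.
suff H : forall x0, g x0 = g m by rewrite H (H v).
move=> x0.
have cl : closed (adj psi) [pred y | g y == g m].
  suff K : forall x y, adj psi x y -> g x = g m -> g y = g m.
    move=> x y hxy /=; apply/eqP/eqP; first exact: K.
    by apply: K; rewrite adj_sym.
  move=> x y /existsP [e /eqP he] gx.
  have H0 := hh x; rewrite /laplacian in H0.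
  have H1 : \sum_(e | x \in psi e) \sum_(w in psi e) (g x - g w) = 0.
    apply/eqP; rewrite -oppr_eq0 -sumrN; apply/eqP; rewrite -[RHS]H0; apply: eq_bigr => e' _.
    rewrite -sumrN; apply: eq_bigr => w _; ring.
  have nn : forall w, 0 <= g x - g w by move=> w; rewrite subr_ge0 gx; exact: Hm.
  have mx : x \in psi e by rewrite he setU11.
  have H2 := psumr_eq0P (fun i _ => sumr_ge0 _ (fun w _ => nn w)) H1 mx.
  have my : y \in psi e by rewrite he !inE eqxx orbT.
  have := psumr_eq0P (fun i _ => nn i) H2 my.
  by move/eqP; rewrite subr_eq0 => /eqP <-.
have := closed_connect cl (hc m x0) ; rewrite !inE eqxx => /esym/eqP.
by [].
Qed.
End Aux.

Theorem theorem2 (V E : finType) (psi : E -> {set V}) (sV : V -> V) (sE : E -> E)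
  (hG : is_graph psi) (hconn : connected_graph psi)
  (hreal : real_structure psi sV sE)
  (D1 D2 : V -> int) (hD1 : real_divisor sV D1) (hD2 : real_divisor sV D2)
  (hlin : lin_equiv psi D1 D2)
  (C : {set V}) (hC : real_component psi sV sE C) :
  (deg_on D1 C = deg_on D2 C %[mod 2])%Z.
Proof.
case: hreal => invV invE hpsi; case: hlin => f hf.
have injV := inv_inj invV; have injE := inv_inj invE.
have lap_comp : forall v, laplacian psi (fun x => f (sV x)) v = laplacian psi f (sV v).
  move=> v; rewrite /laplacian (reindex_inj injE) /=.
  apply: eq_big => [e|e _]; first by rewrite hpsi -{1}(invV v) mem_imset.
  rewrite hpsi big_imset /=; last by move=> ? ? _ _; apply: injV.
  by apply: eq_bigr => w _; rewrite invV.
case: hC => v0 hv0 hCdef.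
have freal : forall v, f (sV v) = f v.
  have hh : forall v, laplacian psi (fun x => f x - f (sV x)) v = 0.
    move=> v; rewrite lapB lap_comp -!hf hD1 hD2; ring.
  move=> v; have := harmonic_const hconn hh v v0; rewrite hv0 subrr.
  by move/eqP; rewrite subr_eq0 => /eqP.
have Creal : forall w, w \in C -> sV w = w.
  move=> w; rewrite hCdef inE => /connectP [p pth ->] {w}.
  elim: p v0 hv0 pth {hCdef} => [|y p IH] x hx //=.
  move=> /andP [hxy hp]; apply: IH hp.
  by case/and3P: hxy => _ /eqP.
have Cclosed : forall v w, v \in C -> real_adj psi sV sE v w -> w \in C.
  move=> v w; rewrite hCdef !inE => hv hvw; exact: connect_trans hv (connect1 hvw).
rewrite /deg_on.
have -> : \sum_(v in C) D2 v = \sum_(v in C) D1 v + \sum_(v in C) laplacian psi f v.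
  by rewrite -big_split /=; apply: eq_bigr => v _; rewrite -hf; ring.
pose h e := \sum_(v in C) (if v \in psi e then \sum_(w in psi e) (f w - f v) else 0).
have hS : \sum_(v in C) laplacian psi f v = \sum_e h e.
  rewrite /laplacian (eq_bigr (fun v => \sum_e (if v \in psi e then \sum_(w in psi e) (f w - f v) else 0))); last by move=> v _; rewrite big_mkcond.
  exact: exchange_big.
have hsym : forall e, h (sE e) = h e.
  move=> e; rewrite /h; apply: eq_bigr => v vC.
  rewrite hpsi -{1}(Creal v vC) mem_imset //; case: ifP => // _.
  rewrite big_imset /=; last by move=> ? ? _ _; apply: injV.
  by apply: eq_bigr => w _; rewrite freal.
have hfix : forall e, sE e = e -> h e = 0.
  move=> e he.
  case: (boolP [exists v, (v \in psi e) && (v \in C)]) => [/existsP [v /andP [ve vC]] | /existsPn hn].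
  - have sub : psi e \subset C.
      apply/subsetP => w we; apply/negPn/negP => wC.
      have vw : v != w by apply: contraNneq wC => <-.
      have pe : psi e = [set v; w].
        apply/eqP; rewrite eq_sym eqEcard; apply/andP; split.
          by apply/subsetP => x; rewrite !inE => /orP [] /eqP ->.
        by rewrite cards2 vw; have := hG e => /andP [_ ].
      have sw : sV w = w.
        have : w \in sV @: psi e by rewrite -hpsi he.
        case/imsetP => x; rewrite pe !inE => /orP [] /eqP -> wx.
          by move: vw; rewrite wx Creal ?eqxx.
        by rewrite -wx.
      have : w \in C.
        apply: (Cclosed v) => //; apply/and3P; split; [apply/eqP; exact: Creal | exact/eqP | ].
        by apply/existsP; exists e; rewrite he pe !eqxx.
      by rewrite (negbTE wC).
    rewrite /h -big_mkcondr /=.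
    rewrite (eq_bigl (fun v => v \in psi e)); last first.
      move=> x; case: (boolP (x \in psi e)) => hx; last by rewrite andbF.
      by rewrite (subsetP sub x hx).
    under eq_bigr do rewrite sumrB.
    by rewrite sumrB [X in _ - X]exchange_big subrr.
  - rewrite /h big1 // => v vC; rewrite ifF //; apply/negbTE.
    by have := hn v; rewrite vC andbT.
pose r (e : E) := nat_of_ord (enum_rank e).
rewrite hS (bigID (fun e => r e < r (sE e))%N) /=.
rewrite [X in _ + (_ + X)](bigID (fun e => r (sE e) < r e)%N) /=.
rewrite [X in _ + (_ + (_ + X))]big1; last first.
  move=> e he; apply: hfix; move: he; rewrite -!leqNgt.
  move=> /andP [h1 h2].
  apply: enum_rank_inj; apply: val_inj; apply/eqP; rewrite eqn_leq.
  by rewrite /r in h1 h2; rewrite h1 h2.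
have -> : \sum_(i | ~~ (r i < r (sE i))%N && (r (sE i) < r i)%N) h i
        = \sum_(i | (r i < r (sE i))%N) h i.
  rewrite (reindex_inj injE) /=; apply: eq_big => e; last by rewrite hsym.
  rewrite invE andb_idl // => /ltnW; by rewrite leqNgt.
have e2 : forall z : int, z + (z + 0) = z * 2 by move=> z; ring.
by rewrite e2 [_ + _ * 2]addrC modzMDl.
Qed.
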